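(* Let $(S^\Omega,\mathcal T)$ be a resource theory with a fair currency $\mathcal C$ (value function $\mathrm{Val}$) for a target $\mathcal S$. Let $V,W\in\mathcal S$ and let $C,C'\in\mathcal C$ be such that for every $\Delta$ in the set $\{\mathrm{Val}(C_2)-\mathrm{Val}(C): C_2\in\mathcal C,\ V\cap C\to W\cap C_2\}\cup\{\mathrm{Val}(C_2)-\mathrm{Val}(C'): C_2\in\mathcal C,\ V\cap C'\to W\cap C_2\}$ both $C$ and $C'$ satisfy $-\Delta\le\mathrm{Val}(\cdot)<c_{\sup}-\Delta$. Then $$\mathrm{Balance}(V\to W\mid C)=\mathrm{Balance}(V\to W\mid C').$$ Moreover $\mathrm{Balance}(V\to W):=\sup_{C\in\mathcal C}\mathrm{Balance}(V\to W\mid C)$ is well defined (finite or $+\infty$, i.e. the supremum is over a non-empty set of real values).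
   Context: A resource theory $(S^\Omega,\mathcal T)$ consists of a set $\Omega$, the specification space $S^\Omega$ of all non-empty subsets of $\Omega$ (resources), and a set $\mathcal T$ of maps $f:S^\Omega\to S^\Omega$ acting element-wise, $f(V)=\bigcup_{\nu\in V} f(\{\nu\})$. $V\to W$ iff some $f\in\mathcal T$ has $f(V)\subseteq W$; $\to$ is assumed to be a pre-order. $\mathcal C\subseteq S^\Omega$ is a currency for target $\mathcal S\subseteq S^\Omega$ if (Order) any two elements of $\mathcal C$ are comparable under $\to$ and $\Omega\in\mathcal C$; (Universality) $\Omega\in\mathcal S$ and every $V\in\mathcal S$ has $C,C'\in\mathcal C$ with $C\to V$, $V\to C'$. A value function $\mathrm{Val}:\mathcal C\to\mathbb R_{\ge0}$ satisfies $\mathrm{Val}(C')\ge\mathrm{Val}(C)\iff C'\to C$ and $\mathrm{Val}(\Omega)=0$; $c_{\sup}=\sup_{C\in\mathcal C}\mathrm{Val}(C)$ (possibly $\infty$). Independence: $C\cap V\ne\emptyset$ for all $C\in\mathcal C,V\in\mathcal S$, and $C\to C'$ implies $C\cap V\to C'\cap V$ for all $V\in\mathcal S$. Balance: $\mathrm{Balance}(V\to W\mid C)=\sup\{\mathrm{Val}(C')-\mathrm{Val}(C): C'\in\mathcal C,\ V\cap C\to W\cap C'\}$ (with $\sup\emptyset=-\infty$). Fairness: $\mathcal C$ is independent of $\mathcal S$, and for all $V,W\in\mathcal S$ and $C_1,C_2\in\mathcal C$ with $V\cap C_1\to W\cap C_2$, setting $\Delta=\mathrm{Val}(C_2)-\mathrm{Val}(C_1)$: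 (F1) for every $C_1'\in\mathcal C$ with $-\Delta\le\mathrm{Val}(C_1')<c_{\sup}-\Delta$ there is $C_2'\in\mathcal C$ with $V\cap C_1'\to W\cap C_2'$ and $\mathrm{Val}(C_2')-\mathrm{Val}(C_1')=\Delta$; (F2) for every $C_2'\in\mathcal C$ with $\Delta\le\mathrm{Val}(C_2')$ there is $C_1'\in\mathcal C$ with $V\cap C_1'\to W\cap C_2'$ and $\mathrm{Val}(C_2')-\mathrm{Val}(C_1')=\Delta$. *)

(* Defs.v *)
From Stdlib Require Import Reals Lra Classical ClassicalEpsilon.
Open Scope R_scope.
Set Implicit Arguments.

Inductive Rbar := Finite (r : R) | p_infty | m_infty.

Definition is_esup (A : R -> Prop) (s : Rbar) : Prop :=
  match s with
  | Finite r => is_lub A r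
  | p_infty => (exists x, A x) /\ forall M, exists x, A x /\ M < x
  | m_infty => forall x, ~ A x
  end.

Lemma esup_ex (A : R -> Prop) : exists s, is_esup A s.
Proof.
  destruct (classic (exists x, A x)) as [Hne | Hem].
  - destruct (classic (bound A)) as [Hb | Hnb].
    + destruct (completeness A Hb Hne) as [m Hm]. exists (Finite m). exact Hm.
    + exists p_infty. split; [exact Hne|]. intro M.
      apply NNPP; intro H. apply Hnb. exists M. intros x Hx.
      destruct (Rle_dec x M) as [|Hn]; [assumption|].
      exfalso; apply H; exists x; split; [assumption|]; lra.
  - exists m_infty. intros x Hx. apply Hem. exists x; exact Hx.
Qed.

Definition esup (A : R -> Prop) : Rbar :=
  proj1_sig (constructive_indefinite_description _ (esup_ex A)).

Definition Rbar_lt (x y : Rbar) : Prop :=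
  match x, y with
  | Finite a, Finite b => a < b
  | Finite _, p_infty => True
  | m_infty, Finite _ => True
  | m_infty, p_infty => True
  | _, _ => False
  end.

Definition Rbar_addr (s : Rbar) (r : R) : Rbar :=
  match s with Finite x => Finite (x + r) | p_infty => p_infty | m_infty => m_infty end.

(** Resources are non-empty subsets of [Om], modelled as predicates.
    A map f : S^Om -> S^Om acting element-wise is determined by its values
    on singletons, g nu := f({nu}) (a non-empty set); then
    f(V) = \bigcup_{nu in V} g nu.  The set of free maps T is a predicate
    on such g. *)
Definition nonempty {Om : Type} (V : Om -> Prop) : Prop := exists x, V x.
Definition full {Om : Type} : Om -> Prop := fun _ => True.
Definition inter {Om : Type} (V W : Om -> Prop) : Om -> Prop := fun x => V x /\ W x.

(** each map sends singletons to non-empty sets (so maps S^Om to S^Om) *)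
Definition elementwise_maps {Om : Type} (T : (Om -> Om -> Prop) -> Prop) : Prop :=
  forall g, T g -> forall nu, nonempty (g nu).

Definition conv {Om : Type} (T : (Om -> Om -> Prop) -> Prop) (V W : Om -> Prop) : Prop :=
  exists g, T g /\ forall nu, V nu -> forall x, g nu x -> W x.

Definition is_preorder {Om : Type} (T : (Om -> Om -> Prop) -> Prop) : Prop :=
  (forall V, nonempty V -> conv T V V) /\
  (forall U V W, nonempty U -> nonempty V -> nonempty W ->
     conv T U V -> conv T V W -> conv T U W).

Definition resource_theory {Om : Type} (T : (Om -> Om -> Prop) -> Prop) : Prop :=
  elementwise_maps T /\ is_preorder T.

Definition is_currency {Om : Type} (T : (Om -> Om -> Prop) -> Prop)
  (Cs Ss : (Om -> Prop) -> Prop) : Prop :=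
  (forall C, Cs C -> nonempty C) /\ (forall V, Ss V -> nonempty V) /\
  (forall C1 C2, Cs C1 -> Cs C2 -> conv T C1 C2 \/ conv T C2 C1) /\ Cs full /\
  Ss full /\
  (forall V, Ss V -> exists C C', Cs C /\ Cs C' /\ conv T C V /\ conv T V C').

Definition is_value_function {Om : Type} (T : (Om -> Om -> Prop) -> Prop)
  (Cs : (Om -> Prop) -> Prop) (Val : (Om -> Prop) -> R) : Prop :=
  (forall C, Cs C -> 0 <= Val C) /\
  (forall C C', Cs C -> Cs C' -> (Val C' >= Val C <-> conv T C' C)) /\
  Val full = 0.

Definition csup {Om : Type} (Cs : (Om -> Prop) -> Prop) (Val : (Om -> Prop) -> R) : Rbar :=
  esup (fun r => exists C, Cs C /\ Val C = r).

Definition independent {Om : Type} (T : (Om -> Om -> Prop) -> Prop)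
  (Cs Ss : (Om -> Prop) -> Prop) : Prop :=
  (forall C V, Cs C -> Ss V -> nonempty (inter C V)) /\
  (forall C C' V, Cs C -> Cs C' -> Ss V -> conv T C C' ->
     conv T (inter C V) (inter C' V)).

Definition bal_set {Om : Type} (T : (Om -> Om -> Prop) -> Prop)
  (Cs : (Om -> Prop) -> Prop) (Val : (Om -> Prop) -> R)
  (V W C : Om -> Prop) : R -> Prop :=
  fun d => exists C', Cs C' /\ conv T (inter V C) (inter W C') /\ d = Val C' - Val C.

(** Balance(V -> W | C) (sup of the empty set is -oo) *)
Definition Balance {Om : Type} (T : (Om -> Om -> Prop) -> Prop)
  (Cs : (Om -> Prop) -> Prop) (Val : (Om -> Prop) -> R)
  (V W C : Om -> Prop) : Rbar :=
  esup (bal_set T Cs Val V W C).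

Definition fair {Om : Type} (T : (Om -> Om -> Prop) -> Prop)
  (Cs Ss : (Om -> Prop) -> Prop) (Val : (Om -> Prop) -> R) : Prop :=
  independent T Cs Ss /\
  forall V W C1 C2, Ss V -> Ss W -> Cs C1 -> Cs C2 ->
    conv T (inter V C1) (inter W C2) ->
    (forall C1', Cs C1' -> - (Val C2 - Val C1) <= Val C1' ->
       Rbar_lt (Finite (Val C1')) (Rbar_addr (csup Cs Val) (- (Val C2 - Val C1))) ->
       exists C2', Cs C2' /\ conv T (inter V C1') (inter W C2') /\
                   Val C2' - Val C1' = Val C2 - Val C1) /\
    (forall C2', Cs C2' -> Val C2 - Val C1 <= Val C2' ->
       exists C1', Cs C1' /\ conv T (inter V C1') (inter W C2') /\
                   Val C2' - Val C1' = Val C2 - Val C1).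

(* Main.v *)
Require Import Defs.
From Stdlib Require Import Reals.
From Stdlib Require Import Lra FunctionalExtensionality PropExtensionality ClassicalEpsilon.
Open Scope R_scope.

Lemma esup_spec (A : R -> Prop) : is_esup A (esup A).
Proof. unfold esup. exact (proj2_sig (constructive_indefinite_description _ (esup_ex A))). Qed.

Theorem mainTheorem8 (Om : Type) (T : (Om -> Om -> Prop) -> Prop)
  (Cs Ss : (Om -> Prop) -> Prop) (Val : (Om -> Prop) -> R)
  (HT : resource_theory T)
  (Hcur : is_currency T Cs Ss)
  (Hval : is_value_function T Cs Val)
  (Hfair : fair T Cs Ss Val)
  (V W C C' : Om -> Prop)
  (HV : Ss V) (HW : Ss W) (HC : Cs C) (HC' : Cs C')
  (Hcond : forall d, (bal_set T Cs Val V W C d \/ bal_set T Cs Val V W C' d) ->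
     (- d <= Val C /\ Rbar_lt (Finite (Val C)) (Rbar_addr (csup Cs Val) (- d))) /\
     (- d <= Val C' /\ Rbar_lt (Finite (Val C')) (Rbar_addr (csup Cs Val) (- d)))) :
  Balance T Cs Val V W C = Balance T Cs Val V W C' /\
  (exists C0, Cs C0 /\ Balance T Cs Val V W C0 <> m_infty).
Proof.
  destruct Hfair as [_ Hf].
  split.
  - unfold Balance. f_equal.
    apply functional_extensionality; intro d.
    apply propositional_extensionality; split; intro Hd.
    + pose proof (Hcond d (or_introl Hd)) as [_ [H1 H2]].
      destruct Hd as [C2 [HC2 [Hcv Hdd]]]. subst d.
      destruct (Hf V W C C2 HV HW HC HC2 Hcv) as [F1 _].
      destruct (F1 C' HC' H1 H2) as [C2' [? [? ?]]].
      exists C2'; split; [assumption|split; [assumption|lra]].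
    + pose proof (Hcond d (or_intror Hd)) as [[H1 H2] _].
      destruct Hd as [C2 [HC2 [Hcv Hdd]]]. subst d.
      destruct (Hf V W C' C2 HV HW HC' HC2 Hcv) as [F1 _].
      destruct (F1 C HC H1 H2) as [C2' [? [? ?]]].
      exists C2'; split; [assumption|split; [assumption|lra]].
  - destruct Hcur as [_ [_ [_ [Hfull [_ Huniv]]]]].
    destruct (Huniv W HW) as [Ca [Cb [HCa [_ [[g [Tg Hg]] _]]]]].
    exists Ca; split; [exact HCa|].
    intro Hm.
    pose proof (esup_spec (bal_set T Cs Val V W Ca)) as Hs.
    unfold Balance in Hm. rewrite Hm in Hs. simpl in Hs.
    apply (Hs (Val full - Val Ca)).
    exists full. split; [exact Hfull|split; [|reflexivity]].
    exists g. split; [exact Tg|].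
    intros nu [_ Hnu] x Hx. split; [exact (Hg nu Hnu x Hx)|exact I].
Qed.
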